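(* Let $p,l\in\mathbb{Z}_{\geq 0}$. For every $M\in\mathrm{Sym}_\infty^{p}$ with $\mathrm{rk}(M)\geq p2^pl$, the image of the orbit $G_\infty M$ under the projection $\mathrm{Sym}_\infty^{p}\to\mathrm{Sym}_l^{p}$ (taking upper-left $l\times l$ blocks) is Zariski dense in $\mathrm{Sym}_l^{p}$.
   Context: $\mathrm{Sym}_\infty$ is the space of symmetric complex $\mathbb{N}\times\mathbb{N}$ matrices, viewed as linear maps from finitely supported sequences $\mathbb{C}^\infty_{\mathrm{fin}}$ to all sequences $\mathbb{C}^\infty$; $\mathrm{Sym}_l$ is the space of symmetric complex $l\times l$ matrices. $G_\infty=\bigcup_k\mathrm{GL}_k(\mathbb{C})$ (embedded via $g\mapsto\mathrm{diag}(g,\mathrm{Id})$) acts on $\mathrm{Sym}_\infty^p$ by $g\cdot(M_1,\dots,M_p)=(gM_1g^T,\dots,gM_pg^T)$. Rank of a tuple: for $M=(M_1,\dots,M_s)\in\mathrm{Hom}(V,W)^s$, $\mathrm{rk}(M)$ is the infimum of $\mathrm{rk}(\sum_i\lambda_iM_i)\in\mathbb{Z}_{\ge0}\cup\{\infty\}$ over all nonzero $(\lambda_1,\dots,\lambda_s)\in\mathbb{C}^s$ (so $\mathrm{rk}(M)=\infty$ if $s=0$). *)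

(* Defs.v *)
From HB Require Import structures.
From mathcomp Require Import all_boot all_order all_algebra.
Set Implicit Arguments. Unset Strict Implicit. Unset Printing Implicit Defensive.
Import Order.TTheory GRing.Theory Num.Theory.
Local Open Scope ring_scope.

Definition infmx (K : Type) := nat -> nat -> K.

Definition symmetric_infmx (K : Type) (A : infmx K) : Prop :=
  forall a b, A a b = A b a.

(* Rank of an infinite matrix A, viewed as a linear map from finitely supported
   sequences to all sequences, is at least r: the image contains r linearly
   independent vectors, i.e. there are r finitely supported vectors
   (supported in [0,N)) whose images are linearly independent. *)
Definition infmx_rank_ge (K : fieldType) (A : infmx K) (r : nat) : Prop :=
  exists (N : nat) (v : 'I_r -> 'I_N -> K),
    forall mu : 'I_r -> K,
      (forall a : nat, \sum_(j < r) mu j * (\sum_(c < N) A a c * v j c) = 0) ->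
      forall j, mu j = 0.

(* rk(M) >= r for a tuple M = (M_1,...,M_p): every nonzero linear combination
   has rank >= r (infimum over nonzero lambda; infinite when p = 0). *)
Definition tuple_rank_ge (K : fieldType) (p : nat) (M : 'I_p -> infmx K)
    (r : nat) : Prop :=
  forall lam : 'I_p -> K, (exists i, lam i != 0) ->
    infmx_rank_ge (fun a b => \sum_(i < p) lam i * M i a b) r.

(* Embedding g in GL_k into G_infty as diag(g, Id). *)
Definition ext_mx (K : fieldType) (k : nat) (g : 'M[K]_k) : infmx K :=
  fun a b =>
    match insub a, insub b with
    | Some i, Some j => g i j
    | _, _ => if a == b then 1 else 0
    end.

(* The infinite matrix g A g^T for g = diag(g, Id); row a of ext_mx g is
   supported in [0, k + a + 1), so the sums below are exact. *)
Definition act_infmx (K : fieldType) (k : nat) (g : 'M[K]_k) (A : infmx K)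
    : infmx K :=
  fun a b => \sum_(c < k + a.+1) \sum_(d < k + b.+1)
               ext_mx g a c * A c d * ext_mx g b d.

Definition ul_block (K : Type) (l : nat) (A : infmx K) : 'M[K]_l :=
  \matrix_(i < l, j < l) A i j.

Inductive pexpr (V K : Type) : Type :=
| PConst of K
| PVar of V
| PAdd of pexpr V K & pexpr V K
| PMul of pexpr V K & pexpr V K.

Fixpoint peval (V : Type) (K : pzRingType) (e : V -> K) (f : pexpr V K) : K :=
  match f with
  | PConst c => c
  | PVar x => e x
  | PAdd f1 f2 => peval e f1 + peval e f2
  | PMul f1 f2 => peval e f1 * peval e f2
  end.

Definition sym_tuple (K : Type) (p l : nat) (X : 'I_p -> 'M[K]_l) : Prop :=
  forall k, (X k)^T = X k.

Definition coords (K : Type) (p l : nat) (X : 'I_p -> 'M[K]_l)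
    : 'I_p * 'I_l * 'I_l -> K :=
  fun v => X v.1.1 v.1.2 v.2.

Definition zariski_dense_sym (K : fieldType) (p l : nat)
    (S : ('I_p -> 'M[K]_l) -> Prop) : Prop :=
  forall f : pexpr ('I_p * 'I_l * 'I_l) K,
    (forall X, S X -> peval (coords X) f = 0) ->
    forall X, sym_tuple X -> peval (coords X) f = 0.

Definition proj_orbit (K : fieldType) (p l : nat) (M : 'I_p -> infmx K)
    : ('I_p -> 'M[K]_l) -> Prop :=
  fun X => exists (k : nat) (g : 'M[K]_k), g \in unitmx /\
    forall i, X i = ul_block l (act_infmx g (M i)).

(* Main.v *)
Require Import Defs.
From HB Require Import structures.
From mathcomp Require Import all_boot all_order all_algebra.
From mathcomp Require Import zify ring lra.
From Stdlib Require Classical_Prop.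
Import Order.TTheory GRing.Theory Num.Theory.
Set Implicit Arguments. Unset Strict Implicit. Unset Printing Implicit Defensive.
Local Open Scope ring_scope.
Section Forms.
Variable K : numClosedFieldType.
Implicit Types (A : infmx K) (x y : {poly K}).

Definition Bn A n x y := \sum_(0 <= a < n) \sum_(0 <= b < n) x`_a * A a b * y`_b.
Definition Bf A x y := Bn A (maxn (size x) (size y)) x y.

Lemma Bn_widen A n m x y : (size x <= n)%N -> (size y <= n)%N -> (n <= m)%N ->
  Bn A m x y = Bn A n x y.
Proof.
move=> sx sy nm; rewrite /Bn (big_cat_nat (leq0n n) nm) /=.
rewrite [X in _ + X]big1_seq ?addr0; last first.
  move=> a /andP[_]; rewrite mem_index_iota => /andP[na _]; apply: big1 => b _.
  by rewrite (nth_default _ (leq_trans sx na)) !mul0r.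
apply: eq_bigr => a _; rewrite (big_cat_nat (leq0n n) nm) /=.
rewrite [X in _ + X]big1_seq ?addr0 //.
move=> b /andP[_]; rewrite mem_index_iota => /andP[nb _].
by rewrite (nth_default _ (leq_trans sy nb)) mulr0.
Qed.

Lemma BfE A n x y : (size x <= n)%N -> (size y <= n)%N -> Bf A x y = Bn A n x y.
Proof.
move=> sx sy; rewrite /Bf (@Bn_widen A (maxn (size x) (size y)) n) //.
- exact: leq_maxl.
- exact: leq_maxr.
- by rewrite geq_max sx sy.
Qed.

Lemma BfDl A x x' y : Bf A (x + x') y = Bf A x y + Bf A x' y.
Proof.
set n := (size x + size x' + size y)%N.
have h1 : (size x <= n)%N by rewrite /n; lia.
have h2 : (size x' <= n)%N by rewrite /n; lia.
have h3 : (size y <= n)%N by rewrite /n; lia.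
have h4 : (size (x + x')%R <= n)%N.
  by apply: leq_trans (size_polyD _ _) _; rewrite geq_max h1 h2.
rewrite !(BfE A (n:=n)) // /Bn -big_split; apply: eq_bigr => a _.
rewrite -big_split; apply: eq_bigr => b _.
by rewrite coefD !mulrDl.
Qed.

Lemma BfDr A x y y' : Bf A x (y + y') = Bf A x y + Bf A x y'.
Proof.
set n := (size y + size y' + size x)%N.
have h1 : (size y <= n)%N by rewrite /n; lia.
have h2 : (size y' <= n)%N by rewrite /n; lia.
have h3 : (size x <= n)%N by rewrite /n; lia.
have h4 : (size (y + y')%R <= n)%N.
  by apply: leq_trans (size_polyD _ _) _; rewrite geq_max h1 h2.
rewrite !(BfE A (n:=n)) // /Bn -big_split; apply: eq_bigr => a _.
rewrite -big_split; apply: eq_bigr => b _.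
by rewrite coefD !mulrDr.
Qed.

Lemma BfZl A c x y : Bf A (c *: x) y = c * Bf A x y.
Proof.
set n := (size x + size y)%N.
have h1 : (size x <= n)%N by rewrite /n; lia.
have h3 : (size y <= n)%N by rewrite /n; lia.
have h2 : (size (c *: x)%R <= n)%N by apply: leq_trans (size_scale_leq _ _) _.
rewrite !(BfE A (n:=n)) // /Bn mulr_sumr; apply: eq_bigr => a _.
rewrite mulr_sumr; apply: eq_bigr => b _.
by rewrite coefZ !mulrA.
Qed.

Lemma BfZr A c x y : Bf A x (c *: y) = c * Bf A x y.
Proof.
set n := (size x + size y)%N.
have h1 : (size x <= n)%N by rewrite /n; lia.
have h3 : (size y <= n)%N by rewrite /n; lia.
have h2 : (size (c *: y)%R <= n)%N by apply: leq_trans (size_scale_leq _ _) _.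
rewrite !(BfE A (n:=n)) // /Bn mulr_sumr; apply: eq_bigr => a _.
rewrite mulr_sumr; apply: eq_bigr => b _.
by rewrite coefZ mulrCA.
Qed.

Lemma Bf0l A y : Bf A 0 y = 0.
Proof. by rewrite -(scale0r 0) BfZl mul0r. Qed.

Lemma Bf0r A x : Bf A x 0 = 0.
Proof. by rewrite -(scale0r 0) BfZr mul0r. Qed.

Lemma BfNl A x y : Bf A (- x) y = - Bf A x y.
Proof. by rewrite -scaleN1r BfZl mulN1r. Qed.

Lemma BfNr A x y : Bf A x (- y) = - Bf A x y.
Proof. by rewrite -scaleN1r BfZr mulN1r. Qed.

Lemma Bf_suml A m (F : 'I_m -> {poly K}) y :
  Bf A (\sum_(i < m) F i) y = \sum_(i < m) Bf A (F i) y.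
Proof.
elim: m F => [|m IH] F; first by rewrite !big_ord0 Bf0l.
by rewrite !big_ord_recr /= BfDl IH.
Qed.

Lemma Bf_sumr A m (F : 'I_m -> {poly K}) x :
  Bf A x (\sum_(i < m) F i) = \sum_(i < m) Bf A x (F i).
Proof.
elim: m F => [|m IH] F; first by rewrite !big_ord0 Bf0r.
by rewrite !big_ord_recr /= BfDr IH.
Qed.

Lemma Bf_sym A x y : symmetric_infmx A -> Bf A x y = Bf A y x.
Proof.
move=> sA; set n := (size x + size y)%N.
rewrite !(BfE A (n:=n)) ?leq_addr ?leq_addl // /Bn exchange_big /=.
apply: eq_bigr => a _; apply: eq_bigr => b _.
by rewrite (sA b a); ring.
Qed.

Lemma Bf_lin p (lam : 'I_p -> K) (Ms : 'I_p -> infmx K) x y :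
  Bf (fun a b => \sum_(i < p) lam i * Ms i a b) x y =
  \sum_(i < p) lam i * Bf (Ms i) x y.
Proof.
rewrite /Bf /Bn.
set n := maxn _ _.
transitivity (\sum_(0 <= a < n) \sum_(0 <= b < n) \sum_(i < p)
                lam i * (x`_a * Ms i a b * y`_b)).
  apply: eq_bigr => a _; apply: eq_bigr => b _.
  rewrite mulr_sumr mulr_suml; apply: eq_bigr => i _; ring.
under eq_bigr => a _ do rewrite exchange_big /=.
rewrite exchange_big /=; apply: eq_bigr => i _.
rewrite mulr_sumr; apply: eq_bigr => a _; rewrite mulr_sumr //.
Qed.

End Forms.
Section MxForms.
Variable K : numClosedFieldType.

Definition bq n (Z : 'M[K]_n) (x y : 'rV[K]_n) : K := (x *m Z *m y^T) 0 0.

Lemma bqDl n (Z : 'M[K]_n) x x' y : bq Z (x + x') y = bq Z x y + bq Z x' y.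
Proof. by rewrite /bq !mulmxDl mxE. Qed.
Lemma bqDr n (Z : 'M[K]_n) x y y' : bq Z x (y + y') = bq Z x y + bq Z x y'.
Proof. by rewrite /bq linearD /= mulmxDr mxE. Qed.
Lemma bqZl n (Z : 'M[K]_n) c x y : bq Z (c *: x) y = c * bq Z x y.
Proof. by rewrite /bq -!scalemxAl mxE. Qed.
Lemma bqZr n (Z : 'M[K]_n) c x y : bq Z x (c *: y) = c * bq Z x y.
Proof. by rewrite /bq linearZ /= -scalemxAr mxE. Qed.
Lemma bq_sym n (Z : 'M[K]_n) x y : Z^T = Z -> bq Z x y = bq Z y x.
Proof.
move=> sZ; have e : (y *m Z *m x^T)^T = x *m Z *m y^T.
  by rewrite !trmx_mul trmxK sZ mulmxA.
by rewrite /bq -e mxE.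
Qed.
Lemma bq_entry m n (Z : 'M[K]_n) (A B : 'M_(m, n)) i j :
  (A *m Z *m B^T) i j = bq Z (row i A) (row j B).
Proof.
rewrite /bq !mxE; apply: eq_bigr => k _.
by rewrite -row_mul !mxE.
Qed.

Lemma two_neq0 : (2 : K) != 0.
Proof. by rewrite pnatr_eq0. Qed.

Lemma bq_polar n (Z : 'M[K]_n) x y : Z^T = Z ->
  bq Z (x + y) (x + y) = bq Z x x + 2 * bq Z x y + bq Z y y.
Proof.
move=> sZ; rewrite !bqDl !bqDr (bq_sym y x sZ); ring.
Qed.

Lemma FL m c (G : 'M[K]_m) (Phi : 'M[K]_(c, m)) : G^T = G ->
  (2 * c < \rank G)%N ->
  exists y : 'rV_m, y *m Phi^T = 0 /\ bq G y y != 0.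
Proof.
move=> sG rG; apply: Classical_Prop.NNPP => H.
have H' : forall y : 'rV_m, y *m Phi^T = 0 -> bq G y y = 0.
  move=> y hy; apply/eqP; apply: contraT => hn; exfalso; apply: H; by exists y.
set K0 := kermx Phi^T.
have kr : forall i, row i K0 *m Phi^T = 0.
  by move=> i; rewrite -row_mul mulmx_ker row0.
have z : K0 *m G *m K0^T = 0.
  apply/matrixP => i j; rewrite bq_entry mxE.
  have hij := H' _ (kr i); have hjj := H' _ (kr j).
  have hs : (row i K0 + row j K0) *m Phi^T = 0 by rewrite mulmxDl kr kr addr0.
  have := H' _ hs; rewrite bq_polar // hij hjj add0r addr0 => /eqP.
  by rewrite mulf_eq0 (negPf two_neq0) /= => /eqP.
have r1 : (\rank (K0 *m G) <= m - \rank K0)%N.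
  have : (K0 *m G <= kermx K0^T)%MS by apply/sub_kermxP.
  by move/mxrankS; rewrite mxrank_ker mxrank_tr.
have r2 : (\rank ((K0^C)%MS *m G) <= m - \rank K0)%N.
  by apply: leq_trans (mxrankM_maxl _ _) _; rewrite mxrank_compl.
have r3 : (\rank G <= \rank (K0 *m G) + \rank ((K0^C)%MS *m G))%N.
  have s1 : (1%:M *m G <= (K0 + (K0^C)%MS)%MS *m G)%MS.
    by apply: submxMr; rewrite sub1mx addsmx_compl_full.
  rewrite mul1mx in s1.
  apply: leq_trans (mxrankS s1) _.
  rewrite addsmxMr.
  exact: mxrank_adds_leqif.
have rK : \rank K0 = (m - \rank Phi)%N by rewrite mxrank_ker mxrank_tr.
have rP : (\rank Phi <= c)%N by exact: rank_leq_row.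
have rPm : (\rank Phi <= m)%N by exact: rank_leq_col.
move: rG; rewrite rK in r1 r2; lia.
Qed.

End MxForms.
Section Factor.
Variable K : numClosedFieldType.

Lemma factor_pivot n (Z : 'M[K]_(1 + n)) : Z^T = Z -> Z 0 0 != 0 ->
  (forall Z' : 'M[K]_n, Z'^T = Z' -> exists C : 'M[K]_n, C *m C^T = Z') ->
  exists Bm : 'M[K]_(1 + n), Bm *m Bm^T = Z.
Proof.
move=> sZ d0 IH.
set d := Z 0 0; set v := ursubmx Z; set Zr := drsubmx Z.
have hdl : dlsubmx Z = v^T by rewrite /v trmx_ursub sZ.
have hul : ulsubmx Z = d%:M.
  rewrite [LHS]mx11_scalar; congr (_%:M); rewrite !mxE.
  by congr (Z _ _); apply: val_inj.
have sZr : Zr^T = Zr by rewrite /Zr trmx_drsub sZ.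
set Z'' := Zr - d^-1 *: (v^T *m v).
have sZ'' : Z''^T = Z''.
  by rewrite /Z'' linearB /= linearZ /= trmx_mul trmxK sZr.
have [C hC] := IH _ sZ''.
set s := sqrtC d.
have s0 : s != 0 by rewrite sqrtC_eq0.
have ss : s * s = d by rewrite -expr2 sqrtCK.
exists (block_mx (s%:M) 0 (s^-1 *: v^T) C).
rewrite tr_block_mx mulmx_block -[RHS]submxK hul hdl.
rewrite ?trmx0 ?mulmx0 ?mul0mx ?addr0 ?add0r tr_scalar_mx.
rewrite linearZ /= trmxK.
congr block_mx.
- by rewrite -scalar_mxM ss.
- by rewrite mul_scalar_mx scalerA divff // scale1r.
- by rewrite scalar_mxC mul_scalar_mx scalerA divff // scale1r.
- rewrite -scalemxAl -scalemxAr scalerA -invfM ss hC /Z''.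
  by rewrite addrC subrK.
Qed.

Definition qf n (Z : 'M[K]_n) x := bq Z x x.

Lemma pivot_exists n (Z : 'M[K]_n.+1) : Z^T = Z -> Z != 0 ->
  exists u : 'rV_n.+1, u 0 0 = 0 /\ bq Z ('e_0 + u) ('e_0 + u) != 0.
Proof.
move=> sZ Z0; apply: Classical_Prop.NNPP => H.
pose e : 'rV[K]_n.+1 := delta_mx 0 0.
have H' : forall u : 'rV_n.+1, u 0 0 = 0 -> bq Z (e + u) (e + u) = 0.
  move=> u hu; apply/eqP; apply: contraT => hn; exfalso; apply: H; by exists u.
have qe : bq Z e e = 0 by have := H' 0; rewrite mxE addr0; apply.
have hu : forall u : 'rV_n.+1, u 0 0 = 0 -> bq Z u u = 0 /\ bq Z e u = 0.
  move=> u u0.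
  have h1 := H' _ u0.
  have h2 : bq Z (e + - u) (e + - u) = 0 by apply: H'; rewrite mxE u0 oppr0.
  rewrite bq_polar // in h1; rewrite bq_polar // in h2.
  rewrite !(bqZl, bqZr, =^~ scaleN1r) qe in h2.
  rewrite qe in h1.
  have e1 : 2 * (2 * bq Z e u) = (0 + 2 * bq Z e u + bq Z u u) -
      (0 + 2 * (-1 * bq Z e u) + -1 * (-1 * bq Z u u)) by ring.
  rewrite h1 h2 subrr in e1.
  have e2 : 2 * (2 * bq Z u u) = 2 * (0 + 2 * bq Z e u + bq Z u u) +
      2 * (0 + 2 * (-1 * bq Z e u) + -1 * (-1 * bq Z u u)) by ring.
  rewrite h1 h2 mulr0 addr0 in e2.
  move/eqP: e1; move/eqP: e2.
  rewrite !mulf_eq0 (negPf (two_neq0 K)) /= => /eqP -> /eqP -> //.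
have qall : forall x : 'rV_n.+1, bq Z x x = 0.
  move=> x; set u := x - x 0 0 *: e.
  have u0 : u 0 0 = 0 by rewrite /u !mxE eqxx mulr1 subrr.
  have -> : x = x 0 0 *: e + u by rewrite /u addrC subrK.
  have [q1 q2] := hu u u0.
  rewrite bq_polar // !(bqZl, bqZr) qe q1 q2; ring.
apply: (negP Z0); apply/eqP/matrixP => i j.
have -> : Z i j = (1%:M *m Z *m (1%:M)^T) i j by rewrite mul1mx trmx1 mulmx1.
rewrite bq_entry mxE.
have := qall (row i 1%:M + row j 1%:M); rewrite bq_polar // !qall add0r addr0.
move/eqP; rewrite mulf_eq0 (negPf (two_neq0 K)) /=; by move/eqP.
Qed.

Lemma sym_factor n (Z : 'M[K]_n) : Z^T = Z -> exists Bm : 'M[K]_n, Bm *m Bm^T = Z.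
Proof.
elim: n Z => [|n IH] Z sZ.
  by exists 0; apply/matrixP => i; case: i.
have [->|Z0] := eqVneq Z 0; first by exists 0; rewrite mul0mx.
have [u [u0 hq]] := pivot_exists sZ Z0.
pose ec : 'cV[K]_n.+1 := delta_mx 0 0.
pose P : 'M[K]_n.+1 := 1%:M + ec *m u.
pose Pi : 'M[K]_n.+1 := 1%:M - ec *m u.
have ue : u *m ec = 0.
  apply/matrixP => i j; rewrite /ec !mxE (bigD1 0) //= big1 ?addr0.
    by rewrite !mxE !ord1 eqxx mulr1 u0.
  by move=> k kn; rewrite !mxE (negPf kn) mulr0.
have PPi : P *m Pi = 1%:M.
  have ee : (ec *m u) *m (ec *m u) = 0.
    by rewrite mulmxA -(mulmxA ec) ue mulmx0 mul0mx.
  rewrite /P /Pi mulmxDl mulmxBr mulmxBr !mul1mx mulmx1 ee subr0.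

  by rewrite subrK.
have PiP : Pi *m P = 1%:M by apply: mulmx1C.
pose Z' := P *m Z *m P^T.
have sZ' : Z'^T = Z' by rewrite /Z' !trmx_mul trmxK sZ mulmxA.
have r0 : row 0 P = 'e_0 + u.
  apply/rowP => j; rewrite /P /ec !mxE big_ord1 !mxE.
  by rewrite !eqxx /= mul1r eq_sym.
have Z'0 : Z' 0 0 != 0 by rewrite /Z' bq_entry r0.
have [C hC] := factor_pivot (n:=n) sZ' Z'0 IH.
exists (Pi *m C).
rewrite trmx_mul mulmxA -[Pi *m C *m C^T]mulmxA hC /Z'.
rewrite !mulmxA PiP mul1mx -mulmxA -trmx_mul PiP trmx1 mulmx1 //.
Qed.

End Factor.
Section KeyLemma.
Variable K : numClosedFieldType.

Lemma sum_delta (n a : nat) (F : nat -> K) : (a < n)%N ->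
  \sum_(0 <= i < n) (i == a)%:R * F i = F a.
Proof.
move=> h; rewrite big_mkord (bigD1 (Ordinal h)) //= eqxx mul1r big1 ?addr0 //.
move=> i hi; have /negPf -> : (nat_of_ord i != a).
  by apply: contra hi => /eqP e; apply/eqP/val_inj.
by rewrite mul0r.
Qed.

Lemma BfXX (A : infmx K) a c : Bf A 'X^a 'X^c = A a c.
Proof.
rewrite (BfE A (n := (a.+1 + c.+1)%N)) ?size_polyXn; try lia.
rewrite /Bn; set n := (a.+1 + c.+1)%N.
transitivity (\sum_(0 <= i < n) (i == a)%:R * (\sum_(0 <= j < n) (j == c)%:R * A i j)).
  apply: eq_bigr => i _; rewrite mulr_sumr; apply: eq_bigr => j _.
  rewrite !coefXn; ring.
rewrite sum_delta ?sum_delta //; rewrite /n; lia.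
Qed.

Lemma rank_rows R (T : nat -> 'I_R -> K) :
  (forall mu : 'I_R -> K, (forall a, \sum_(j < R) mu j * T a j = 0) ->
     forall j, mu j = 0) ->
  exists n0, \rank (\matrix_(a < n0, j < R) T a j) = R.
Proof.
move=> indep.
pose Tn n : 'M[K]_(n, R) := \matrix_(a < n, j < R) T a j.
have core : forall r0 n0, \rank (Tn n0) = r0 ->
    (forall n, (\rank (Tn n) <= r0)%N) -> r0 = R.
  move=> r0 n0 hn0 hmax.
  have mono : forall n, (n0 <= n)%N ->
      (kermx (Tn n0)^T <= kermx (Tn n)^T)%MS.
    move=> n hn.
    pose S : 'M[K]_(n0, n) := \matrix_(a < n0, b < n) (a == b :> nat)%:R.
    have ST : S *m Tn n = Tn n0.
      apply/matrixP => a j; rewrite !mxE.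
      have ha : (a < n)%N by apply: leq_trans (ltn_ord a) hn.
      rewrite (bigD1 (Ordinal ha)) //= !mxE eqxx mul1r big1 ?addr0 //.
      move=> b hb; rewrite !mxE.
      have /negPf -> : (nat_of_ord a != b).
        by apply: contra hb => /eqP e; apply/eqP/val_inj.
      by rewrite mul0r.
    have sub : (kermx (Tn n)^T <= kermx (Tn n0)^T)%MS.
      apply/sub_kermxP; rewrite -ST trmx_mul mulmxA mulmx_ker mul0mx //.
    have rk : \rank (kermx (Tn n)^T) = \rank (kermx (Tn n0)^T).
      rewrite !mxrank_ker !mxrank_tr.
      have h1 := hmax n.
      have h2 : (\rank (Tn n0) <= \rank (Tn n))%N.
        by rewrite -ST; exact: mxrankM_maxr.
      rewrite hn0 in h2 *.
      by have -> : \rank (Tn n) = r0 by apply/eqP; rewrite eqn_leq h1 h2.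
    have := mxrank_leqif_sup sub; rewrite rk => /leqifP.
    by case: ifP => // _; rewrite ltnn.
  apply/eqP; rewrite eqn_leq -hn0 rank_leq_col /=.
  apply: contraT; rewrite -ltnNge => lt.
  set Kn := kermx (Tn n0)^T.
  have : Kn != 0.
    by rewrite -mxrank_eq0 /Kn mxrank_ker mxrank_tr subn_eq0 -ltnNge.
  move=> /eqP Kn0; exfalso; apply: Kn0; apply/matrixP => i j0; rewrite [RHS]mxE.
  pose mu := fun j => Kn i j.

  apply: (indep mu) => a; rewrite /mu.
  have sa : (kermx (Tn n0)^T <= kermx (Tn (maxn n0 a.+1))^T)%MS.
    by apply: mono; exact: leq_maxl.
  have ha : (a < maxn n0 a.+1)%N by rewrite leq_max ltnSn orbT.
  have := sub_kermxP sa; rewrite -/Kn => /matrixP/(_ i (Ordinal ha)).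
  move=> H; transitivity ((Kn *m (Tn (maxn n0 a.+1))^T) i (Ordinal ha)).
    rewrite [RHS]mxE; apply: eq_bigr => j _; congr (_ * _); by rewrite !mxE.
  by rewrite H mxE.
have claim : forall k, (k <= R)%N -> exists n, (k <= \rank (Tn n))%N.
  elim=> [|k IHk] hk; first by exists 0%N.
  have [n hn] := IHk (ltnW hk).
  apply: Classical_Prop.NNPP => hno.
  have hall : forall n', (\rank (Tn n') <= k)%N.
    move=> n'; rewrite leqNgt; apply/negP => h; apply: hno; by exists n'.
  have e : \rank (Tn n) = k by apply/eqP; rewrite eqn_leq hn hall.
  have := core _ _ e hall; move=> ek; rewrite ek in hk; by rewrite ltnn in hk.
have [n hn] := claim R (leqnn R); exists n.
apply/eqP; rewrite eqn_leq rank_leq_col; exact: hn.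
Qed.

End KeyLemma.
Section KeyLemma2.
Variable K : numClosedFieldType.

Lemma Key (Mf : nat -> infmx K) (A : infmx K) R (cs : seq ({poly K} * nat)) :
  symmetric_infmx A -> infmx_rank_ge A R -> (2 * size cs < R)%N ->
  exists y, (forall u, u \in cs -> Bf (Mf u.2) u.1 y = 0) /\ Bf A y y != 0.
Proof.
move=> sA [N [v indep]] hR.
pose T a (j : 'I_R) := \sum_(c < N) A a c * v j c.
have [n0 hn0] := @rank_rows K R T indep.
pose vp (j : 'I_R) : {poly K} := \sum_(c < N) v j c *: 'X^c.
pose m := (R + n0)%N.
pose z (t : 'I_m) : {poly K} :=
  match split t with inl j => vp j | inr a => 'X^a end.
pose G : 'M[K]_m := \matrix_(s, t) Bf A (z s) (z t).
have sG : G^T = G by apply/matrixP => s t; rewrite !mxE Bf_sym.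
have BXv : forall (a : nat) j, Bf A 'X^a (vp j) = T a j.
  move=> a j; rewrite Bf_sumr /T; apply: eq_bigr => c _.
  by rewrite BfZr BfXX mulrC.
have sr : forall a : 'I_n0, split (rshift R a : 'I_m) = inr a.
  by move=> a; exact: (unsplitK (inr a)).
have sl : forall j : 'I_R, split (lshift n0 j : 'I_m) = inl j.
  by move=> j; exact: (unsplitK (inl j)).
have rG : (R <= \rank G)%N.
  pose Sr : 'M[K]_(n0, m) := \matrix_(a, t) (t == rshift R a)%:R.
  pose Sc : 'M[K]_(m, R) := \matrix_(t, j) (t == lshift n0 j)%:R.
  have e : Sr *m G *m Sc = \matrix_(a < n0, j < R) T a j.
    apply/matrixP => a j; rewrite !mxE (bigD1 (lshift n0 j)) //= big1 ?addr0;
      last by move=> t /negPf h; rewrite !mxE h mulr0.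
    rewrite !mxE eqxx mulr1 (bigD1 (rshift R a)) //= big1 ?addr0;
      last by move=> t /negPf h; rewrite !mxE h mul0r.
    by rewrite !mxE eqxx mul1r /z sr sl BXv.
  rewrite -{1}hn0 -e; apply: leq_trans (mxrankM_maxl _ _) _.
  exact: mxrankM_maxr.
pose Phi : 'M[K]_(size cs, m) := \matrix_(s, t)
  Bf (Mf (nth (0, 0%N) cs s).2) (nth (0, 0%N) cs s).1 (z t).
have [y [hy hq]] := FL Phi sG (leq_trans hR rG).
exists (\sum_(t < m) y 0 t *: z t); split.
  move=> u hu; set s := index u cs.
  have hs : (s < size cs)%N by rewrite index_mem.
  have hu' : nth (0, 0%N) cs s = u by apply: nth_index.
  rewrite Bf_sumr; transitivity ((y *m Phi^T) 0 (Ordinal hs)); last by rewrite hy mxE.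
  rewrite mxE; apply: eq_bigr => t _; by rewrite BfZr !mxE /= hu'.
have -> : Bf A (\sum_(t < m) y 0 t *: z t) (\sum_(t < m) y 0 t *: z t) = bq G y y.
  rewrite Bf_suml /bq mxE.
  under eq_bigr => s _ do rewrite BfZl Bf_sumr mulr_sumr.
  rewrite exchange_big /=; apply: eq_bigr => t _.
  rewrite mxE mulr_suml; apply: eq_bigr => s _.
  by rewrite BfZr !mxE; ring.
exact: hq.
Qed.

End KeyLemma2.
Section Iso.
Variable K : numClosedFieldType.
Variable p : nat.
Variable M : 'I_p -> infmx K.
Hypothesis hsym : forall i, symmetric_infmx (M i).
Variable R : nat.
Hypothesis hrk : tuple_rank_ge M R.

Definition Mn (i : nat) : infmx K :=
  match insub i with Some o => M o | None => fun _ _ => 0 end.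

Lemma Mn_ord (i : 'I_p) : Mn i = M i.
Proof. by rewrite /Mn valK. Qed.

Definition F (mu : 'I_p -> K) x y := \sum_(i < p) mu i * Bf (M i) x y.

Lemma FDl mu x x' y : F mu (x + x') y = F mu x y + F mu x' y.
Proof. by rewrite /F -big_split; apply: eq_bigr => i _; rewrite BfDl mulrDr. Qed.
Lemma FDr mu x y y' : F mu x (y + y') = F mu x y + F mu x y'.
Proof. by rewrite /F -big_split; apply: eq_bigr => i _; rewrite BfDr mulrDr. Qed.
Lemma FZl mu c x y : F mu (c *: x) y = c * F mu x y.
Proof. by rewrite /F mulr_sumr; apply: eq_bigr => i _; rewrite BfZl mulrCA. Qed.
Lemma FZr mu c x y : F mu x (c *: y) = c * F mu x y.
Proof. by rewrite /F mulr_sumr; apply: eq_bigr => i _; rewrite BfZr mulrCA. Qed.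
Lemma F_sym mu x y : F mu x y = F mu y x.
Proof. by rewrite /F; apply: eq_bigr => i _; rewrite Bf_sym. Qed.
Lemma F_lin2 a b (mu nu : 'I_p -> K) x y :
  F (fun i => a * mu i - b * nu i) x y = a * F mu x y - b * F nu x y.
Proof.
rewrite /F mulr_sumr mulr_sumr -sumrB; apply: eq_bigr => i _; ring.
Qed.

Definition Ortho (cs : seq ({poly K} * nat)) y :=
  forall u, u \in cs -> Bf (Mn u.2) u.1 y = 0.

Lemma OrthoD cs y y' : Ortho cs y -> Ortho cs y' -> Ortho cs (y + y').
Proof. by move=> h h' u hu; rewrite BfDr h // h' // addr0. Qed.
Lemma OrthoZ cs c y : Ortho cs y -> Ortho cs (c *: y).
Proof. by move=> h u hu; rewrite BfZr h // mulr0. Qed.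
Lemma Ortho_catl cs cs' y : Ortho (cs ++ cs') y -> Ortho cs y.
Proof. by move=> h u hu; apply: h; rewrite mem_cat hu. Qed.

Definition indep q (n : 'I_q -> 'I_p -> K) (pi : 'I_p -> K) :=
  forall (al : 'I_q -> K) (be : K),
    (forall i, \sum_(k < q) al k * n k i + be * pi i = 0) ->
    be = 0 /\ forall k, al k = 0.

Lemma ord_split q (P : 'I_q.+1 -> Prop) :
  (forall k : 'I_q, P (widen_ord (leqnSn q) k)) -> P ord_max -> forall k, P k.
Proof.
move=> h1 h2 k; case: (ltnP k q) => hk.
  have -> : k = widen_ord (leqnSn q) (Ordinal hk) by apply: val_inj.
  exact: h1.
have -> : k = ord_max.
  by apply: val_inj => /=; apply/eqP; rewrite eqn_leq hk andbT -ltnS.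
exact: h2.
Qed.

Definition extq q (al : 'I_q -> K) (c : K) : 'I_q.+1 -> K :=
  fun k => if insub (val k) is Some k' then al k' else c.

Lemma extq_sum q (al : 'I_q -> K) c (g : 'I_q.+1 -> K) :
  \sum_(k < q.+1) extq al c k * g k =
  \sum_(k < q) al k * g (widen_ord (leqnSn q) k) + c * g ord_max.
Proof.
rewrite big_ord_recr /=; congr (_ + _).
  apply: eq_bigr => k _; rewrite /extq /=.
  by have -> : insub (val k) = Some k by rewrite valK.
by rewrite /extq insubN //= ltnn.
Qed.

Lemma extq_w q (al : 'I_q -> K) c k : extq al c (widen_ord (leqnSn q) k) = al k.
Proof. by rewrite /extq /= valK. Qed.
Lemma extq_m q (al : 'I_q -> K) c : extq al c ord_max = c.
Proof. by rewrite /extq insubN //= ltnn. Qed.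

Lemma indep_drop q (n : 'I_q.+1 -> 'I_p -> K) pi :
  indep n pi -> indep (fun k => n (widen_ord (leqnSn q) k)) pi.
Proof.
move=> hi al be h.
have := hi (extq al 0) be; rewrite -/(extq al 0).
case.
  by move=> i; rewrite extq_sum mul0r addr0 h.
move=> -> hk; split => // k; by rewrite -(extq_w al 0 k) hk.
Qed.

Lemma indep_swap q (n : 'I_q.+1 -> 'I_p -> K) pi a b :
  indep n pi -> a != 0 ->
  indep (fun k => n (widen_ord (leqnSn q) k)) (fun i => a * pi i - b * n ord_max i).
Proof.
move=> hi a0 al be h.
have := hi (extq al (- (be * b))) (be * a).
case.
  move=> i; rewrite extq_sum; apply: eq_trans (h i); rewrite /=; ring.
move=> /eqP; rewrite mulf_eq0 (negPf a0) orbF => /eqP -> hk; split => // k.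
by rewrite -(extq_w al (- (0 * b)) k) hk.
Qed.

Lemma Iso q (n : 'I_q -> 'I_p -> K) pi cs :
  indep n pi -> (2 * (size cs + p * q) < R)%N ->
  exists y, Ortho cs y /\ (forall k, F (n k) y y = 0) /\ F pi y y != 0.
Proof.
elim: q n pi cs => [|q IH] n pi cs hi hb.
  have [i hi0] : exists i, pi i != 0.
    apply: Classical_Prop.NNPP => H.
    have := hi (fun _ => 0) 1; case.
      move=> i; rewrite big_ord0 add0r mul1r.
      apply/eqP; apply: contraT => hn; exfalso; apply: H; by exists i.
    by move=> /eqP; rewrite oner_eq0.
  have sA : symmetric_infmx (fun a b => \sum_(i < p) pi i * M i a b).
    by move=> a b; apply: eq_bigr => j _; rewrite hsym.
  have := Key Mn sA (hrk (ex_intro _ i hi0)); rewrite muln0 addn0 in hb.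
  case/(_ cs hb) => y [oy hy]; exists y; split => //; split.
    by case.
  by rewrite Bf_lin in hy.
pose n' := fun k : 'I_q => n (widen_ord (leqnSn q) k).
pose Nq := n ord_max.
have hb1 : (2 * (size cs + p * q) < R)%N.
  by apply: leq_trans hb; rewrite ltnS leq_mul2l /= leq_add2l leq_mul2l leqnSn orbT.
have [v [ov [iv pv]]] := IH n' pi cs (indep_drop hi) hb1.
have iso_split : forall y, (forall k, F (n' k) y y = 0) -> F Nq y y = 0 ->
    forall k, F (n k) y y = 0.
  by move=> y h1 h2; apply: ord_split.
have [hNv|hNv] := eqVneq (F Nq v v) 0.
  by exists v; split => //; split => //; apply: iso_split.
pose rho := fun i => F Nq v v * pi i - F pi v v * Nq i.
pose cs' := cs ++ [seq (v, i) | i <- iota 0 p].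
have hb2 : (2 * (size cs' + p * q) < R)%N.
  rewrite /cs' size_cat size_map size_iota; move: hb; rewrite mulnS; nia.
have [w [ow [iw rw]]] := IH n' rho cs' (@indep_swap q n pi (F Nq v v) (F pi v v) hi hNv) hb2.
have vw : forall mu, F mu v w = 0.
  move=> mu; rewrite /F big1 // => i _.
  have : (v, val i) \in cs' by rewrite /cs' mem_cat; apply/orP; right;
    apply/mapP; exists (val i) => //; rewrite mem_iota /=.
  by move/ow => /=; rewrite Mn_ord => ->; rewrite mulr0.
have Fr : F rho w w = F Nq v v * F pi w w - F pi v v * F Nq w w.
  by rewrite /rho F_lin2.
have owc := Ortho_catl ow.
have [hNw|hNw] := eqVneq (F Nq w w) 0.
  exists w; split => //; split; first by apply: iso_split.
  by apply: contra rw; rewrite Fr hNw => /eqP ->; rewrite mulr0 mulr0 subrr.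
pose t := sqrtC (- F Nq v v / F Nq w w).
have tt : t * t = - F Nq v v / F Nq w w by rewrite -expr2 sqrtCK.
have Fx : forall mu, F mu (v + t *: w) (v + t *: w) = F mu v v + t * t * F mu w w.
  move=> mu; rewrite !FDl !FDr !FZl !FZr vw (F_sym mu w v) vw; ring.
exists (v + t *: w); split; first by apply: OrthoD => //; apply: OrthoZ.
split.
  apply: iso_split.
    by move=> k; rewrite Fx iv iw mulr0 addr0.
  by rewrite Fx tt; field.
rewrite Fx tt.
have e : (F pi v v + - F Nq v v / F Nq w w * F pi w w) * F Nq w w = - F rho w w.
  by rewrite Fr; field.
apply: contra rw => /eqP h; by rewrite -oppr_eq0 -e h mul0r.
Qed.


Lemma F_delta (i0 : 'I_p) x y :
  F (fun i => ((i : nat) == i0)%:R) x y = Bf (M i0) x y.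
Proof.
rewrite /F (bigD1 i0) //= eqxx mul1r big1 ?addr0 // => i hi.
have /negPf -> : (nat_of_ord i != i0) by apply: contra hi => /eqP e; apply/eqP/val_inj.
by rewrite mul0r.
Qed.

Variable l : nat.
Hypothesis hR : (p * 2 ^ p * l <= R)%N.

Lemma pow2_ge p0 : (4 <= p0)%N -> (4 * p0 <= 2 ^ p0)%N.
Proof.
elim: p0 => // n IH; rewrite ltnS leq_eqVlt => /orP[/eqP <- //|h].
by rewrite expnS mulnS; have := IH h; lia.
Qed.

Lemma budget k a : (k < p)%N -> (a < l)%N ->
  (2 * (k * l * k + a * k.+1 + p * k) < R)%N.
Proof.
move=> hk ha; apply: leq_trans hR.
have hl : (1 <= l)%N by apply: leq_ltn_trans ha.
case: (leqP 4 p) => hp.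
  have h2 := pow2_ge hp.
  have e1 : (p * (4 * p) * l <= p * 2 ^ p * l)%N :=
    leq_mul (leq_mul (leqnn p) h2) (leqnn l).
  apply: leq_trans e1.
  have e2 : (k * l * k <= k * l * (p - 1))%N by apply: leq_mul => //; lia.
  have e3 : (a * k.+1 <= (l - 1) * p)%N by apply: leq_mul; lia.
  have e4 : (p * k <= p * (p - 1))%N by apply: leq_mul; lia.
  have e5 : (k * l * (p - 1) <= (p - 1) * l * (p - 1))%N.
    by apply: leq_mul => //; apply: leq_mul; lia.
  have E : (k * l * k + a * k.+1 + p * k <=
            (p - 1) * l * (p - 1) + (l - 1) * p + p * (p - 1))%N.
    by apply: leq_add; [apply: leq_add|]; [apply: leq_trans e2 e5|exact: e3|exact: e4].
  have E2 : (2 * (k * l * k + a * k.+1 + p * k) <=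
            2 * ((p - 1) * l * (p - 1) + (l - 1) * p + p * (p - 1)))%N.
    by rewrite leq_mul2l E orbT.
  apply: leq_ltn_trans E2 _.
  case: p hp {hk e2 e3 e4 e5 h2 E} => [|P] // _; case: l hl {ha} => [|L] // _.
  rewrite !subn1 /=.
  have -> : (P.+1 * (4 * P.+1) * L.+1 = 2 * (P * L.+1 * P + L * P.+1 + P.+1 * P)
                + (2 * P * P * L + 6 * P * L + 6 * P + 2 * L + 4))%N by ring.
  by rewrite -addn1 leq_add2l addn4.
move: hk ha; case: p hp => [|[|[|[|]]]] //= _; case: k => [|[|[|]]] //=; lia.
Qed.

Definition built (k0 a0 j b : nat) :=
  (b < l)%N && ((j < k0)%N || ((j == k0) && (b < a0)%N)).

Definition Good (W : nat -> nat -> {poly K}) (k0 a0 : nat) :=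
  (forall j b k a (i : 'I_p), built k0 a0 j b -> built k0 a0 k a ->
      (i < maxn j k)%N -> Bf (M i) (W j b) (W k a) = 0) /\
  (forall k a b (i : 'I_p), built k0 a0 k a -> built k0 a0 k b ->
      (i : nat) = k -> Bf (M i) (W k a) (W k b) = (a == b)%:R).

Definition cstr (W : nat -> nat -> {poly K}) (k a : nat) :=
  [seq (W jb.1 jb.2, i) | jb <- [seq (j, b) | j <- iota 0 k, b <- iota 0 l],
                          i <- iota 0 k] ++
  [seq (W k b, i) | b <- iota 0 a, i <- iota 0 k.+1].

Lemma size_cstr W k a : size (cstr W k a) = (k * l * k + a * k.+1)%N.
Proof. by rewrite size_cat !size_allpairs !size_iota. Qed.

Lemma Good_step W k0 a0 : (k0 < p)%N -> (a0 < l)%N -> Good W k0 a0 ->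
  exists W', Good W' k0 a0.+1.
Proof.
move=> hk ha [G1 G2].
pose k0' : 'I_p := Ordinal hk.
pose n := fun (t : 'I_k0) (i : 'I_p) => ((i : nat) == t)%:R : K.
pose pi := fun i : 'I_p => ((i : nat) == k0)%:R : K.
have hind : indep n pi.
  move=> al be h.
  have hb : be = 0.
    have := h k0'; rewrite /pi /= eqxx mulr1 big1 ?add0r // => t _.
    by rewrite /n /= (gtn_eqF (ltn_ord t)) mulr0.
  split => // t; have ht : (t < p)%N := ltn_trans (ltn_ord t) hk.
  have := h (Ordinal ht); rewrite hb mul0r addr0 /n /= (bigD1 t) //= eqxx mulr1.
  rewrite big1 ?addr0 // => t' ht'; have /negPf -> : (nat_of_ord t != t').
    by apply: contra ht' => /eqP e; apply/eqP/val_inj.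
  by rewrite mulr0.
have hb : (2 * (size (cstr W k0 a0) + p * k0) < R)%N by rewrite size_cstr budget.
have [y [oy [iy py]]] := Iso hind hb.
have Fn : forall t : 'I_k0, F (n t) y y = Bf (M (Ordinal (ltn_trans (ltn_ord t) hk))) y y.
  by move=> t; rewrite -F_delta.
have Fpi : F pi y y = Bf (M k0') y y by rewrite -F_delta.
set d := F pi y y in py Fpi.
pose s := sqrtC d.
have s0 : s != 0 by rewrite sqrtC_eq0.
pose w := s^-1 *: y.
have ww : Bf (M k0') w w = 1.
  rewrite BfZl BfZr -Fpi mulrA -invfM -expr2 sqrtCK mulVf //.
have wiso : forall i : 'I_p, (i < k0)%N -> Bf (M i) w w = 0.
  move=> i hi; rewrite BfZl BfZr.
  have := iy (Ordinal hi); rewrite Fn.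
  have -> : Ordinal (ltn_trans (ltn_ord (Ordinal hi)) hk) = i by apply: val_inj.
  by move=> ->; rewrite !mulr0.
have wort : forall j b (i : 'I_p), (W j b, val i) \in cstr W k0 a0 ->
    Bf (M i) (W j b) w = 0.
  move=> j b i hin; rewrite BfZr; have := oy _ hin; rewrite /= Mn_ord => ->.
  by rewrite mulr0.
have mem1 : forall j b (i : nat), (j < k0)%N -> (b < l)%N -> (i < k0)%N ->
    (W j b, i) \in cstr W k0 a0.
  move=> j b i hj hb' hi; rewrite mem_cat; apply/orP; left.
  apply: (allpairs_f (fun jb i => (W jb.1 jb.2, i)) (x := (j, b))).
    by apply: (allpairs_f pair); rewrite mem_iota.
  by rewrite mem_iota.
have mem2 : forall b (i : nat), (b < a0)%N -> (i <= k0)%N ->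
    (W k0 b, i) \in cstr W k0 a0.
  move=> b i hb' hi; rewrite mem_cat; apply/orP; right.
  by apply: (allpairs_f (fun b i => (W k0 b, i))); rewrite mem_iota.
pose W' := fun j b => if (j == k0) && (b == a0) then w else W j b.
have bS : forall j b, built k0 a0.+1 j b =
    built k0 a0 j b || ((j == k0) && (b == a0)).
  move=> j b; rewrite /built; case: (eqVneq j k0) => [->|hj].
    rewrite ?eqxx ?ltnn /= [(b < a0.+1)%N]ltnS [(b <= a0)%N]leq_eqVlt.
    by case: (eqVneq b a0) => [->|hb'] /=; rewrite ?ha ?ltnn ?orbF ?orbT ?andbT.
  by rewrite /= !orbF.
have bO : forall j b, built k0 a0 j b -> (j <= k0)%N /\ ~~ ((j == k0) && (b == a0)).
  move=> j b /andP[_ /orP[h|/andP[/eqP -> h]]].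
    by split; [exact: ltnW|rewrite (ltn_eqF h)].
  by split => //; rewrite eqxx (ltn_eqF h).
have oldnew : forall j b (i : 'I_p), built k0 a0 j b -> (i < k0)%N ->
    Bf (M i) (W j b) w = 0.
  move=> j b i hb' hi; apply: wort.
  move: hb' => /andP[hbl /orP[hj|/andP[/eqP -> hba]]].
    exact: mem1.
  by apply: mem2 => //; exact: ltnW.
exists W'; split.
  move=> j b k a i; rewrite !bS /W'.
  case hjn : ((j == k0) && (b == a0)); case hkn : ((k == k0) && (a == a0));
    rewrite ?orbT ?orbF => hj hk' hi.
  - move: hjn hkn hi => /andP[/eqP -> _] /andP[/eqP -> _]; rewrite maxnn.
    exact: wiso.
  - move: hjn => /andP[/eqP ej _]; have [hkk _] := bO _ _ hk'.
    rewrite (Bf_sym _ _ (hsym i)); apply: oldnew => //; move: hi; rewrite ej.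
    by rewrite (maxn_idPl hkk).
  - move: hkn => /andP[/eqP ek _]; have [hjj _] := bO _ _ hj.
    apply: oldnew => //; move: hi; rewrite ek.
    by rewrite (maxn_idPr hjj).
  - exact: G1.
move=> k a b i; rewrite !bS /W'.
case hkn : ((k == k0) && (a == a0)); case hbn : ((k == k0) && (b == a0));
  rewrite ?orbT ?orbF => ha' hb' ei.
- move: hkn hbn => /andP[/eqP ek /eqP ->] /andP[_ /eqP ->]; rewrite eqxx.
  have -> : i = k0' by apply: val_inj => /=; rewrite ei ek.
  exact: ww.
- move: hkn => /andP[/eqP ek /eqP ea].
  move: hb' => /andP[hbl /orP[|/andP[_ hba]]]; first by rewrite ek ltnn.
  rewrite (Bf_sym _ _ (hsym i)) wort; last by rewrite ek; apply: mem2 => //=; rewrite ei ek.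
  by rewrite ea (gtn_eqF hba).
- move: hbn => /andP[/eqP ek /eqP eb].
  move: ha' => /andP[hal /orP[|/andP[_ haa]]]; first by rewrite ek ltnn.
  rewrite wort; last by rewrite ek; apply: mem2 => //=; rewrite ei ek.
  by rewrite eb (ltn_eqF haa).
- exact: G2.
Qed.


Lemma built_next k0 j b : built k0 l j b = built k0.+1 0 j b.
Proof.
rewrite /built; case: (ltnP b l) => //= hb.
by rewrite andbT ltn0 andbF orbF [(j < k0.+1)%N]ltnS [(j <= k0)%N]leq_eqVlt orbC.
Qed.

Lemma Good_all : exists W, Good W p 0.
Proof.
have Gk : forall k0, (k0 <= p)%N -> exists W, Good W k0 0.
  elim=> [|k0 IH] hk.
    exists (fun _ _ => 0); split.
      by move=> j b k a i /andP[_]; rewrite ltn0 andbF.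
    by move=> k a b i /andP[_]; rewrite ltn0 andbF.
  have [W GW] := IH (ltnW hk).
  have Ga : forall a0, (a0 <= l)%N -> exists W, Good W k0 a0.
    elim=> [|a0 IHa] ha; first by exists W.
    have [W' GW'] := IHa (ltnW ha).
    exact: Good_step hk ha GW'.
  have [W' [G1 G2]] := Ga l (leqnn l).
  exists W'; split.
    move=> j b k a i; rewrite -!built_next; exact: G1.
  move=> k a b i; rewrite -!built_next; exact: G2.
exact: Gk p (leqnn p).
Qed.

Lemma Mn_sym i : symmetric_infmx (Mn i).
Proof. by rewrite /Mn; case: insubP => [o _ _|_] a b //; apply: hsym. Qed.

Lemma Bf_sumnl A m (G : nat -> {poly K}) y :
  Bf A (\sum_(0 <= i < m) G i) y = \sum_(0 <= i < m) Bf A (G i) y.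
Proof. by rewrite !big_mkord Bf_suml. Qed.
Lemma Bf_sumnr A m (G : nat -> {poly K}) x :
  Bf A x (\sum_(0 <= i < m) G i) = \sum_(0 <= i < m) Bf A x (G i).
Proof. by rewrite !big_mkord Bf_sumr. Qed.

Lemma quad_id l' (E U : 'M[K]_l') :
  E *m U^T + U *m E^T + U *m U^T = (U + E) *m (U + E)^T - E *m E^T.
Proof.
rewrite linearD /= mulmxDl !mulmxDr addrA addrK.
by rewrite [in LHS]addrC [in LHS](addrC (E *m U^T)) [in LHS]addrA.
Qed.

Section Tri.
Variable W : nat -> nat -> {poly K}.
Hypothesis GW : Good W p 0.
Variable X : 'I_p -> 'M[K]_l.
Hypothesis sX : forall k, (X k)^T = X k.

Definition Gm (i j k : nat) : 'M[K]_l :=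
  \matrix_(b, b') Bf (Mn i) (W j b) (W k b').

Definition Xn (i : nat) : 'M[K]_l :=
  match insub i with Some o => X o | None => 0 end.

Lemma Gm_tr i j k : (Gm i j k)^T = Gm i k j.
Proof. by apply/matrixP => b b'; rewrite !mxE (Bf_sym _ _ (Mn_sym i)). Qed.

Lemma Gm_z i j k : (j < p)%N -> (k < p)%N -> (i < maxn j k)%N -> Gm i j k = 0.
Proof.
move=> hj hk hi; apply/matrixP => b b'; rewrite !mxE.
have hip : (i < p)%N by apply: leq_trans hi _; rewrite geq_max (ltnW hj) (ltnW hk).
have -> : Mn i = M (Ordinal hip) by rewrite -Mn_ord.
by case: GW => G1 _; apply: G1; rewrite // /built ?ltn_ord ?hj ?hk.
Qed.

Lemma Gm_id i : (i < p)%N -> Gm i i i = 1%:M.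
Proof.
move=> hi; apply/matrixP => b b'; rewrite !mxE.
have -> : Mn i = M (Ordinal hi) by rewrite -Mn_ord.
by case: GW => _ G2; rewrite G2 // /built ?ltn_ord ?hi.
Qed.

Lemma Xn_sym i : (Xn i)^T = Xn i.
Proof. by rewrite /Xn; case: insubP => [o _ _|_]; rewrite ?sX ?trmx0. Qed.

Definition Teq (Y : nat -> 'M[K]_l) i :=
  \sum_(0 <= j < i.+1) \sum_(0 <= k < i.+1) Y j *m Gm i j k *m (Y k)^T = Xn i.

Lemma tri_solve : exists Y : nat -> 'M[K]_l, forall i, (i < p)%N -> Teq Y i.
Proof.
have H : forall n, (n <= p)%N -> exists Y : nat -> 'M[K]_l,
    forall i, (i < n)%N -> Teq Y i.
  elim=> [|n IH] hn; first by exists (fun _ => 0).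
  have [Y hY] := IH (ltnW hn).
  pose E := \sum_(0 <= j < n) Y j *m Gm n j n.
  pose Fs := \sum_(0 <= j < n) \sum_(0 <= k < n) Y j *m Gm n j k *m (Y k)^T.
  have sFs : Fs^T = Fs.
    rewrite /Fs linear_sum /= exchange_big /=; apply: eq_bigr => j _.
    rewrite linear_sum /=; apply: eq_bigr => k _.
    by rewrite !trmx_mul trmxK Gm_tr mulmxA.
  have sRHS : (Xn n - Fs + E *m E^T)^T = Xn n - Fs + E *m E^T.
    by rewrite linearD linearB /= Xn_sym sFs trmx_mul trmxK.
  have [Bm hBm] := sym_factor sRHS.
  pose Y' := fun j => if j == n then Bm - E else Y j.
  exists Y' => i; rewrite ltnS leq_eqVlt => /orP[/eqP ->|hi].
    rewrite /Teq big_nat_recr //= big_nat_recr //=.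
    have eY : forall j, (j < n)%N -> Y' j = Y j.
      by move=> j hj; rewrite /Y' (ltn_eqF hj).
    have eU : Y' n = Bm - E by rewrite /Y' eqxx.
    set U := Y' n in eU *.
    have e1 : \sum_(0 <= j < n) \sum_(0 <= k < n.+1) Y' j *m Gm n j k *m (Y' k)^T
              = Fs + E *m U^T.
      rewrite /Fs /E mulmx_suml -big_split /=; apply: eq_big_nat => j hj.
      rewrite big_nat_recr //= eY //; congr (_ + _).
      by apply: eq_big_nat => k hk; rewrite !eY.
    have e2 : \sum_(0 <= k < n) U *m Gm n n k *m (Y' k)^T = U *m E^T.
      rewrite /E linear_sum /= mulmx_sumr; apply: eq_big_nat => k hk.
      by rewrite eY // trmx_mul Gm_tr mulmxA.
    rewrite e1 e2 Gm_id // mulmx1 -addrA (addrA (E *m U^T)) quad_id eU subrK hBm.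
    by rewrite addrK addrC subrK.
  have hin : (i < n)%N by [].
  have := hY i hin; rewrite /Teq => <-.
  apply: eq_big_nat => j /andP[_ hj]; apply: eq_big_nat => k /andP[_ hk].
  have hjn : (j < n)%N by apply: leq_trans hj hi.
  have hkn : (k < n)%N by apply: leq_trans hk hi.
  by rewrite /Y' (ltn_eqF hjn) (ltn_eqF hkn).
exact: H p (leqnn p).
Qed.

End Tri.

Lemma Bf_comb (A : infmx K) (W : nat -> nat -> {poly K}) (Y : nat -> 'M[K]_l)
    (a a' : 'I_l) m :
  Bf A (\sum_(0 <= j < m) \sum_(b < l) Y j a b *: W j b)
       (\sum_(0 <= k < m) \sum_(b' < l) Y k a' b' *: W k b') =
  \sum_(0 <= j < m) \sum_(0 <= k < m)
     (Y j *m (\matrix_(b, b') Bf A (W j b) (W k b')) *m (Y k)^T) a a'.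
Proof.
rewrite Bf_sumnl; apply: eq_bigr => j _; rewrite Bf_suml.
under eq_bigr => b _ do rewrite BfZl Bf_sumnr mulr_sumr.
rewrite exchange_big /=; apply: eq_bigr => k _.
rewrite !mxE.
under eq_bigr => b _ do rewrite Bf_sumr mulr_sumr.
rewrite exchange_big /=; apply: eq_bigr => b' _.
rewrite !mxE mulr_suml; apply: eq_bigr => b _.
by rewrite BfZr !mxE; ring.
Qed.

Lemma exists_h (X : 'I_p -> 'M[K]_l) : (forall k, (X k)^T = X k) ->
  exists h : 'I_l -> {poly K},
    forall (i : 'I_p) (a a' : 'I_l), Bf (M i) (h a) (h a') = X i a a'.
Proof.
move=> sX.
have [W GW] := Good_all.
have [Y hY] := tri_solve GW sX.
exists (fun a => \sum_(0 <= j < p) \sum_(b < l) Y j a b *: W j b) => i a a'.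
rewrite -Mn_ord Bf_comb.
have hi := ltn_ord i.
have cut : forall (G : nat -> K), (forall j, (i < j)%N -> (j < p)%N -> G j = 0) ->
    \sum_(0 <= j < p) G j = \sum_(0 <= j < i.+1) G j.
  move=> G hG; rewrite (big_cat_nat (n := i.+1)) //= [X in _ + X]big1_seq ?addr0 //.
  move=> j /andP[_]; rewrite mem_index_iota => /andP[hj hjp]; exact: hG.
have Gz : forall j k, (j < p)%N -> (k < p)%N -> (i < maxn j k)%N ->
    (Y j *m (\matrix_(b, b') Bf (Mn i) (W j b) (W k b')) *m (Y k)^T) a a' = 0.
  move=> j k hj hk hm; have := Gm_z GW hj hk hm; rewrite /Gm => ->.
  by rewrite mulmx0 mul0mx mxE.
rewrite cut; last first.
  move=> j hj hjp; rewrite big_seq big1 // => k; rewrite mem_index_iota => /andP[_ hk].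
  by apply: Gz => //; rewrite leq_max hj.
transitivity (\sum_(0 <= j < i.+1) \sum_(0 <= k < i.+1)
     (Y j *m (\matrix_(b, b') Bf (Mn i) (W j b) (W k b')) *m (Y k)^T) a a').
  apply: eq_big_nat => j /andP[_ hj]; apply: cut => k hk hkp.
  apply: Gz => //; first by apply: leq_ltn_trans hi.
  by rewrite leq_max hk orbT.
have := hY i hi; rewrite /Teq /Gm => /matrixP/(_ a a').
rewrite summxE => H.
have -> : X i a a' = Xn X i a a' by rewrite /Xn valK.
rewrite -H; apply: eq_bigr => j _; by rewrite summxE.
Qed.

End Iso.
Section Final.
Variable K : numClosedFieldType.

Lemma ext_sum (G : nat -> K) n m : (n <= m)%N ->
  (forall i, (n <= i)%N -> (i < m)%N -> G i = 0) ->
  \sum_(0 <= i < m) G i = \sum_(0 <= i < n) G i.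
Proof.
move=> nm hG; rewrite (big_cat_nat (n := n)) //= [X in _ + X]big1_seq ?addr0 //.
move=> i /andP[_]; rewrite mem_index_iota => /andP[h1 h2]; exact: hG.
Qed.

Lemma Bsum2 (A : infmx K) (x y : {poly K}) n1 n2 :
  (size x <= n1)%N -> (size y <= n2)%N ->
  \sum_(c < n1) \sum_(d < n2) x`_c * A c d * y`_d = Bf A x y.
Proof.
move=> sx sy; rewrite (BfE A (n := (n1 + n2)%N)); try lia.
rewrite /Bn (@ext_sum _ n1); last 2 first.
- by rewrite leq_addr.
- move=> c hc _; apply: big1 => d _; by rewrite (nth_default _ (leq_trans sx hc)) !mul0r.
rewrite big_mkord; apply: eq_bigr => c _.
rewrite (@ext_sum _ n2) ?leq_addl ?big_mkord //.
move=> d hd _; by rewrite (nth_default _ (leq_trans sy hd)) mulr0.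
Qed.

Lemma realize p l (M : 'I_p -> infmx K) (h : 'I_l -> {poly K}) N (eps : K) :
  (forall a, size (h a) <= l + N)%N ->
  \det (eps%:M + \matrix_(a, c) (h a)`_c) != 0 ->
  proj_orbit M (fun i => \matrix_(a, a')
     Bf (M i) (h a + eps *: 'X^a) (h a' + eps *: 'X^a')).
Proof.
move=> hN hdet.
pose h1 : 'M[K]_l := \matrix_(a, c) (h a)`_c.
pose h2 : 'M[K]_(l, N) := \matrix_(a, c) (h a)`_(l + c).
pose g : 'M[K]_(l + N) := block_mx (eps%:M + h1) h2 0 1%:M.
exists (l + N)%N, g; split.
  by rewrite unitmxE det_ublock det1 mulr1 unitfE.
pose rp := fun a : 'I_l => h a + eps *: 'X^a.
have srp : forall a, (size (rp a) <= l + N)%N.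
  move=> a; apply: leq_trans (size_polyD _ _) _; rewrite geq_max hN /=.
  apply: leq_trans (size_scale_leq _ _) _; rewrite size_polyXn.
  by apply: leq_trans (ltn_ord a) _; rewrite leq_addr.
have ext : forall (a : 'I_l) c, ext_mx g a c = (rp a)`_c.
  move=> a c; rewrite /ext_mx /rp coefD coefZ coefXn.
  case: insubP => [a0 _ ea0|]; last first.
    by rewrite /= ltn_addr.
  have -> : a0 = lshift N a by apply: val_inj.
  case: insubP => [c0 _ ec0|].
    case: (splitP c0) => [c1 ec|c1 ec].
      have -> : c0 = lshift N c1 by apply: val_inj.
      rewrite block_mxEul !mxE.
      have ecc : c = c1 by rewrite -ec0 -ec.
      by rewrite ecc addrC eq_sym mulr_natr.
    have -> : c0 = rshift l c1 by apply: val_inj.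
    rewrite block_mxEur !mxE.
    have ecc : c = (l + c1)%N by rewrite -ec0 -ec.
    rewrite ecc.
    have /negPf -> : (l + c1 != a)%N by rewrite neq_ltn; apply/orP; right; apply: leq_trans (ltn_ord a) (leq_addr _ _).
    by rewrite mulr0 addr0.
  rewrite -leqNgt => hc.
  have hac : (a < c)%N.
    by apply: leq_trans hc; apply: leq_trans (ltn_ord a) (leq_addr _ _).
  have /negPf -> : (nat_of_ord a != c) by rewrite neq_ltn hac.
  rewrite nth_default; last by apply: leq_trans (hN a) hc.
  have /negPf -> : (c != nat_of_ord a) by rewrite neq_ltn hac orbT.
  by rewrite mulr0 addr0.
move=> i; apply/matrixP => a a'; rewrite !mxE /act_infmx.
under eq_bigr => c _ do under eq_bigr => d _ do rewrite !ext.
by rewrite Bsum2 // ; apply: leq_trans (srp _) (leq_addr _ _).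
Qed.

Lemma peval_ext V (e e' : V -> K) (f : pexpr V K) :
  (forall v, e v = e' v) -> peval e f = peval e' f.
Proof. by move=> h; elim: f => //= [f1 -> f2 ->|f1 -> f2 ->]. Qed.

Lemma peval_poly V (Q : V -> {poly K}) (f : pexpr V K) :
  exists P : {poly K}, forall x, peval (fun v => (Q v).[x]) f = P.[x].
Proof.
elim: f => [c|v|f1 [P1 h1] f2 [P2 h2]|f1 [P1 h1] f2 [P2 h2]].
- by exists c%:P => x; rewrite hornerC.
- by exists (Q v).
- by exists (P1 + P2) => x /=; rewrite h1 h2 hornerD.
- by exists (P1 * P2) => x /=; rewrite h1 h2 hornerM.
Qed.

Lemma poly_zero_everywhere (q : {poly K}) : (forall x, q.[x] = 0) -> q = 0.
Proof.
move=> hq; apply/eqP; apply: contraT => q0.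
pose rs := [seq (i%:R : K) | i <- iota 0 (size q)].
have := max_poly_roots q0 (rs := rs).
rewrite size_map size_iota ltnn; apply.
  by apply/allP => x _; rewrite /root hq.
rewrite map_inj_uniq ?iota_uniq // => m n /eqP; by rewrite eqr_nat => /eqP.
Qed.

End Final.
Unset Implicit Arguments.
Theorem lemma3p9 (K : numClosedFieldType) (p l : nat)
    (M : 'I_p -> infmx K)
    (hsym : forall i, symmetric_infmx (M i))
    (hrk : tuple_rank_ge M (p * 2 ^ p * l)%N) :
  @zariski_dense_sym K p l (@proj_orbit K p l M).
Proof.
move=> f hf X sX.
have [h hh] := @exists_h K p M hsym _ hrk l (leqnn _) X sX.
pose N := (\sum_(a < l) size (h a))%N.
have hN : forall a, (size (h a) <= l + N)%N.
  move=> a; apply: leq_trans (leq_addl l _); rewrite /N (bigD1 a) //=.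
  exact: leq_addr.
pose h1 : 'M[K]_l := \matrix_(a, c) (h a)`_c.
pose chi := char_poly (- h1).
have chiE : forall x, chi.[x] = \det (x%:M + h1).
  move=> x; rewrite /chi /char_poly -horner_evalE -det_map_mx; congr (\det _).
  apply/matrixP => a c; rewrite !mxE /= horner_evalE.
  by rewrite hornerD hornerN hornerC opprK hornerMn hornerX.
pose Q := fun v : 'I_p * 'I_l * 'I_l =>
  (X v.1.1 v.1.2 v.2)%:P
  + (Bf (M v.1.1) (h v.1.2) 'X^(v.2) + Bf (M v.1.1) 'X^(v.1.2) (h v.2)) *: 'X
  + Bf (M v.1.1) 'X^(v.1.2) 'X^(v.2) *: 'X^2.
have QE : forall x v, (Q v).[x] =
    Bf (M v.1.1) (h v.1.2 + x *: 'X^(v.1.2)) (h v.2 + x *: 'X^(v.2)).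
  move=> x v; rewrite /Q !hornerD hornerC !hornerZ hornerX hornerXn.
  rewrite !BfDl !BfDr !BfZl !BfZr hh; ring.
have [P hP] := peval_poly Q f.
have Pchi : P * chi = 0.
  apply: poly_zero_everywhere => x; rewrite hornerM chiE.
  have [d0|dn] := eqVneq (\det (x%:M + h1)) 0; first by rewrite d0 mulr0.
  rewrite -hP.
  have -> : peval (fun v => (Q v).[x]) f = 0.
    rewrite (@peval_ext _ _ _ (coords (fun i => \matrix_(a, a')
       Bf (M i) (h a + x *: 'X^a) (h a' + x *: 'X^a')))).
      by apply: hf; apply: realize.
    by move=> v; rewrite /coords mxE QE.
  by rewrite mul0r.
have P0 : P = 0.
  move/eqP: Pchi; rewrite mulf_eq0 => /orP[/eqP //|].
  by rewrite (negPf (monic_neq0 (char_poly_monic _))).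
transitivity (peval (fun v => (Q v).[0]) f).
  apply: peval_ext => v; by rewrite QE !scale0r !addr0 /coords hh.
by rewrite hP P0 horner0.
Qed.
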